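(* Under the TLT diffusion model, the conditional intertwined influence function is monotone: for every target product $p^j$, every fixed choice of seed sets $\mathcal{S}^{-j}$ of the other products, every $\mathcal{T}\subseteq\mathcal{V}$ and every $u\in\mathcal{V}\setminus\mathcal{T}$, $I(\mathcal{T}\cup\{u\}\mid\mathcal{S}^{-j})\ge I(\mathcal{T}\mid\mathcal{S}^{-j})$.
   Context: Let $G=(\mathcal{V},\mathcal{E})$ be a directed social network (an edge $(v,u)$ means $v$ can influence $u$) and $\mathcal{P}=\{p^1,\dots,p^n\}$ a set of products. For each product $p^l$ and ordered pair of users $(v,u)$ there is an influence weight $w^l_{v,u}\ge 0$ ($w^l_{v,u}=0$ if $(v,u)\notin\mathcal{E}$). Each user $u_i$ has, for each product $p^l$, an initial threshold $\theta^l_i$, drawn independently and uniformly at random from $[0,1]$. For each user $u_i$ and ordered pair of distinct products $(p^l,p^j)$ a threshold updating coefficient $\phi_i^{l\to j}>0$ is given. TLT diffusion: each product $p^l$ has a seed set $\mathcal{S}^l$; at step $0$ exactly the users of $\mathcal{S}^l$ are active for $p^l$. At each step $t\ge1$, active users stay active, and a user $u_i$ not active for $p^l$ becomes active for $p^l$ if $\sum_{v\text{ active for }p^l\text{ at end of step }t-1} w^l_{v,u_i}\ge \theta^l_i\prod_{p^m\in A_i}\phi_i^{m\to l}$, where $A_i$ is the set of products other than $p^l$ for which $u_i$ is active at the end of step $t-1$. The process runs until nothing changes. Conditional intertwined influence function $I(\mathcal{S}^j\mid\mathcal{S}^{-j})$, where $\mathcal{S}^{-j}$ lists the seed sets of all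 products other than $p^j$: first the products other than $p^j$ diffuse under TLT from $\mathcal{S}^{-j}$ until termination; then each user $u_i$'s threshold for $p^j$ is set to $\theta^j_i\prod_{p^m\in A_i}\phi_i^{m\to j}$, with $A_i$ the set of other products for which $u_i$ ended up active, and $p^j$ diffuses from $\mathcal{S}^j$ under the linear threshold rule with these thresholds and weights $w^j$. $I(\mathcal{S}^j\mid\mathcal{S}^{-j})$ is the expected number of users active for $p^j$ at the end. *)

(* Defs.v *)
From HB Require Import structures.
From mathcomp Require Import all_boot all_order all_algebra.
From mathcomp Require Import all_classical all_reals all_analysis.
Set Implicit Arguments. Unset Strict Implicit. Unset Printing Implicit Defensive.
Import Order.TTheory GRing.Theory Num.Theory.
Local Open Scope ring_scope.

Section TLT.
Variables (R : realType) (V P : finType).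
(* w l v u : influence weight of v on u for product l *)
Variable w : P -> V -> V -> R.
(* phi u m l : threshold updating coefficient phi_u^{m -> l} *)
Variable phi : V -> P -> P -> R.
(* theta (l, u) : initial threshold of user u for product l *)
Variable theta : (P * V)%type -> R.

Definition others_active (act : P -> {set V}) (u : V) (l : P) : {set P} :=
  [set m | (m != l) && (u \in act m)].

Definition tlt_step (D : {set P}) (act : P -> {set V}) : P -> {set V} :=
  fun l => if l \in D then
     act l :|: [set u | theta (l, u) * \prod_(m in others_active act u l) phi u m l
                          <= \sum_(v in act l) w l v u]
   else act l.

(* Active sets only grow, so after #|P| * #|V| steps nothing changes any more:
   this is the terminal state of the process. *)
Definition tlt_final (D : {set P}) (act0 : P -> {set V}) : P -> {set V} :=
  iter (#|P| * #|V|) (tlt_step D) act0.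

(* Phase 1: all products other than j diffuse from their seeds S^{-j}. *)
Definition phase1 (j : P) (S : P -> {set V}) : P -> {set V} :=
  tlt_final [set~ j] (fun l => if l == j then finset.set0 else S l).

(* Phase 2: linear threshold diffusion of p^j with updated thresholds. *)
Definition lt_step (j : P) (thr : V -> R) (A : {set V}) : {set V} :=
  A :|: [set u | thr u <= \sum_(v in A) w j v u].

Definition lt_final (j : P) (thr : V -> R) (A0 : {set V}) : {set V} :=
  iter #|V| (lt_step j thr) A0.

Definition cond_spread (j : P) (T : {set V}) (S : P -> {set V}) : nat :=
  let act := phase1 j S in
  #|lt_final j (fun u => theta (j, u) * \prod_(m in others_active act u j) phi u m j) T|.
End TLT.

(* Expectation over thresholds drawn independently and uniformly from [0,1]:
   iterated Lebesgue integral over [0,1] in each coordinate (Fubini-Tonelli). *)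
Section Expect.
Variables (R : realType) (K : finType).
Definition upd (th : K -> R) (k : K) (x : R) : K -> R :=
  fun k' => if k' == k then x else th k'.

Fixpoint iter_int (s : seq K) (f : (K -> R) -> \bar R) (th : K -> R) : \bar R :=
  match s with
  | [::] => f th
  | k :: s' => (\int[@lebesgue_measure R]_(x in `[0%R, 1%R]%classic) iter_int s' f (upd th k x))%E
  end.

Definition uniform_expect (f : (K -> R) -> \bar R) : \bar R :=
  iter_int (enum K) f (fun _ => 0).
End Expect.

Definition cond_influence (R : realType) (V P : finType)
  (w : P -> V -> V -> R) (phi : V -> P -> P -> R)
  (j : P) (Sj : {set V}) (S : P -> {set V}) : \bar R :=
  uniform_expect (fun theta : (P * V)%type -> R =>
    ((cond_spread w phi theta j Sj S)%:R)%:E).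

(* Main.v *)
Require Import Defs.
From HB Require Import structures.
From mathcomp Require Import all_boot all_order all_algebra.
From mathcomp Require Import all_classical all_reals all_analysis.
Import Order.TTheory GRing.Theory Num.Theory.
Local Open Scope ring_scope.

Lemma int_mono d (T : measurableType d) (R : realType) (mu : {measure set T -> \bar R})
  (D : set T) (f g : T -> \bar R) :
  (forall x, (0 <= f x)%E) -> (forall x, (f x <= g x)%E) ->
  (\int[mu]_(x in D) f x <= \int[mu]_(x in D) g x)%E.
Proof.
move=> f0 fg.
have g0 : forall x, (0 <= g x)%E by move=> x; exact: le_trans (f0 x) (fg x).
have pf : forall h : T -> \bar R, (forall x, 0 <= h x)%E -> forall x, ((h \_ D)^\- x = 0)%E.
  move=> h h0 x; rewrite (@ge0_funenegE _ _ setT) ?inE //.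
  by move=> y _; rewrite /patch; case: ifP.
rewrite /integral; apply: leeB.
  apply: ereal_sup_le => _ [h /= hF <-]; exists h => //= x.
  apply: le_trans (hF x) _; apply: (@funepos_le _ _ setT); rewrite ?inE //.
  by move=> y _; rewrite /patch; case: ifP.
apply: ereal_sup_le => _ [h /= hF <-]; exists h => //= x.
by apply: le_trans (hF x) _; rewrite pf // pf.
Qed.
Lemma sum_sub (R : realType) (V : finType) (F : V -> R) (A B : {set V}) :
  (forall v, 0 <= F v) -> A \subset B -> \sum_(v in A) F v <= \sum_(v in B) F v.
Proof.
move=> F0 AB; rewrite [leLHS]big_mkcond [leRHS]big_mkcond /=.
apply: ler_sum => v _; case: ifP => vA; first by rewrite (fintype.subsetP AB v vA).
by case: ifP.
Qed.

Lemma lt_final_mono (R : realType) (V P : finType) (w : P -> V -> V -> R) j thr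
  (A B : {set V}) : (forall v u, 0 <= w j v u) -> A \subset B ->
  lt_final w j thr A \subset lt_final w j thr B.
Proof.
move=> w0; rewrite /lt_final; elim: #|V| => //= n IH AB.
have := IH AB => {}IH; apply/fintype.subsetP => x; rewrite /lt_step !inE => /orP[xA|xs].
  by rewrite (fintype.subsetP IH x xA).
apply/orP; right; apply: le_trans xs _; exact: sum_sub.
Qed.

Lemma iter_int_ge0 (R : realType) (K : finType) (s : seq K) (f : (K -> R) -> \bar R) th :
  (forall t, (0 <= f t)%E) -> (0 <= iter_int s f th)%E.
Proof.
move=> f0; elim: s th => //= k s IH th; apply: integral_ge0 => x _; exact: IH.
Qed.

Lemma iter_int_mono (R : realType) (K : finType) (s : seq K) (f g : (K -> R) -> \bar R) th :
  (forall t, (0 <= f t)%E) -> (forall t, (f t <= g t)%E) ->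
  (iter_int s f th <= iter_int s g th)%E.
Proof.
move=> f0 fg; elim: s th => //= k s IH th.
apply: int_mono => x; [exact: iter_int_ge0 | exact: IH].
Qed.

Theorem theorem2 (R : realType) (V P : finType) (E : rel V)
  (w : P -> V -> V -> R) (phi : V -> P -> P -> R)
  (hw_ge0 : forall l v u, 0 <= w l v u)
  (hw_edge : forall l v u, ~~ E v u -> w l v u = 0)
  (hphi : forall u l m, l != m -> 0 < phi u l m)
  (j : P) (S : P -> {set V}) (T : {set V}) (u : V) (hu : u \notin T) :
  (cond_influence w phi j T S <= cond_influence w phi j (u |: T) S)%E.
Proof.
rewrite /cond_influence /uniform_expect; apply: iter_int_mono => t.
  by rewrite lee_fin.
rewrite lee_fin ler_nat /cond_spread; apply: subset_leq_card.
apply: lt_final_mono => //; exact: finset.subsetUr.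
Qed.
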